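(* Let $k\ge3$, $n\ge2$, $N\in\mathbb{Z}$, and let $P$ be an $N$-representative of a $k$-spiral $[P]\in\mathcal{P}_n$. If $P$ is of type $\alpha$, then $(P_i,P_{i+k},P_{i+2k})$ is positive for all $i>N$. If $P$ is of type $\beta$, then $(P_{i+2k},P_{i+k},P_i)$ is positive for all $i>N$.
   Context: The affine patch $\mathbb{A}^2=\{[x:y:1]\}\subset\mathbb{RP}^2$ is identified with $\mathbb{R}^2$. For $V_1,V_2,V_3\in\mathbb{A}^2$ with affine coordinates $\tilde V_j=(x_j,y_j,1)$, $\mathcal{O}(V_1,V_2,V_3)=\det(\tilde V_1,\tilde V_2,\tilde V_3)$; the triple is positive if $\mathcal{O}>0$. $\operatorname{int}(V_1,V_2,V_3)$ is the interior of the affine triangle. A twisted $n$-gon is a map $P:\mathbb{Z}\to\mathbb{RP}^2$ with every three consecutive points non-collinear and $P_{i+n}=M(P_i)$ for a fixed $M\in\mathrm{PGL}_3(\mathbb{R})$; $\mathcal{P}_n$ is the set of classes modulo projective equivalence. $P$ is $k$-nice if $P_i,P_{i+1},P_{i+k},P_{i+k+1}$ are in general position for every $i$. For $k\ge3$, $[P]\in\mathcal{P}_n$ is a $k$-spiral of type $\alpha$ (resp. $\beta$) if it is $k$-nice and for every $N\in\mathbb{Z}$ some representative $P$ satisfies, for all $i\ge N$: $P_i\in\mathbb{A}^2$, $(P_i,P_{i+1},P_{i+2})$ positive, and (type $\alpha$) $(P_i,P_{i+1},P_{i+k+1})$ positive with $P_{i+k}\in\operatorname{int}(P_i,P_{i+1},P_{i+k+1})$,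 resp. (type $\beta$) $(P_i,P_{i+1},P_{i+k})$ positive with $P_{i+k+1}\in\operatorname{int}(P_i,P_{i+1},P_{i+k})$. Such a representative is called an $N$-representative of type $\alpha$ (resp. $\beta$). *)

(* Defs.v *)
(* Points of RP^2 are represented by nonzero lifts in R^3
   (column vectors 'cV[R]_3); the affine patch A^2 = {[x:y:1]} is the set of
   points whose third homogeneous coordinate is nonzero. *)
From HB Require Import structures.
From mathcomp Require Import all_boot all_order all_algebra.
Set Implicit Arguments. Unset Strict Implicit. Unset Printing Implicit Defensive.
Import Order.TTheory GRing.Theory Num.Theory.
Local Open Scope ring_scope.

Section Spirals.
Variable R : realFieldType.
Notation vec := 'cV[R]_3.

Definition mx3 (u v w : vec) : 'M[R]_3 :=
  \matrix_(i < 3, j < 3)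
    (if (j : nat) == 0%N then u i 0 else if (j : nat) == 1%N then v i 0 else w i 0).

Definition det3 (u v w : vec) : R := \det (mx3 u v w).

Definition proj_eq (u v : vec) : Prop := exists2 c : R, c != 0 & u = c *: v.

Definition collinear (u v w : vec) : Prop := det3 u v w = 0.

Definition general_position4 (a b c d : vec) : Prop :=
  [/\ ~ collinear a b c, ~ collinear a b d, ~ collinear a c d & ~ collinear b c d].

Definition in_affine (v : vec) : Prop := v 2%:R 0 != 0.

Definition aff (v : vec) : vec := (v 2%:R 0)^-1 *: v.

Definition orient (u v w : vec) : R := det3 (aff u) (aff v) (aff w).

Definition positive_triple (u v w : vec) : Prop :=
  [/\ in_affine u, in_affine v, in_affine w & 0 < orient u v w].

Definition in_int (p a b c : vec) : Prop :=
  [/\ in_affine p, in_affine a, in_affine b, in_affine c &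
   exists l1 l2 l3 : R, [/\ 0 < l1, 0 < l2, 0 < l3, l1 + l2 + l3 = 1 &
       aff p = l1 *: aff a + l2 *: aff b + l3 *: aff c]].

Definition twisted_ngon (n : nat) (P : int -> vec) : Prop :=
  [/\ forall i, P i != 0,
      forall i, ~ collinear (P i) (P (i + 1)) (P (i + 2)) &
      exists2 M : 'M[R]_3, M \in unitmx &
        forall i, proj_eq (P (i + n%:Z)) (M *m P i)].

Definition proj_equiv (P Q : int -> vec) : Prop :=
  exists2 A : 'M[R]_3, A \in unitmx & forall i, proj_eq (Q i) (A *m P i).

Definition k_nice (k : nat) (P : int -> vec) : Prop :=
  forall i, general_position4 (P i) (P (i + 1)) (P (i + k%:Z)) (P (i + k%:Z + 1)).

Definition Nrep_alpha (k : nat) (N : int) (P : int -> vec) : Prop :=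
  forall i, N <= i ->
    [/\ in_affine (P i),
        positive_triple (P i) (P (i + 1)) (P (i + 2)),
        positive_triple (P i) (P (i + 1)) (P (i + k%:Z + 1)) &
        in_int (P (i + k%:Z)) (P i) (P (i + 1)) (P (i + k%:Z + 1))].

Definition Nrep_beta (k : nat) (N : int) (P : int -> vec) : Prop :=
  forall i, N <= i ->
    [/\ in_affine (P i),
        positive_triple (P i) (P (i + 1)) (P (i + 2)),
        positive_triple (P i) (P (i + 1)) (P (i + k%:Z)) &
        in_int (P (i + k%:Z + 1)) (P i) (P (i + 1)) (P (i + k%:Z))].

Definition spiral_alpha (k n : nat) (P : int -> vec) : Prop :=
  [/\ (3 <= k)%N, twisted_ngon n P, k_nice k P &
      forall N : int, exists Q, [/\ twisted_ngon n Q, proj_equiv P Q & Nrep_alpha k N Q]].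

Definition spiral_beta (k n : nat) (P : int -> vec) : Prop :=
  [/\ (3 <= k)%N, twisted_ngon n P, k_nice k P &
      forall N : int, exists Q, [/\ twisted_ngon n Q, proj_equiv P Q & Nrep_beta k N Q]].

End Spirals.

(* Main.v *)
Require Import Defs.
From HB Require Import structures.
From mathcomp Require Import all_boot all_order all_algebra.
From mathcomp Require Import ring lra.
Import Order.TTheory GRing.Theory Num.Theory.
Local Open Scope ring_scope.

Definition g (R : realFieldType) (u : 'cV[R]_3) (n : nat) := u (inord n) 0.
Arguments g {R}.
Lemma cv (R : realFieldType) (u : 'cV[R]_3) (x : 'I_3) : u x 0 = g u x.
Proof. by rewrite /g inord_val. Qed.

Lemma det3E (R : realFieldType) (u v w : 'cV[R]_3) :
  det3 u v w = g u 0 * (g v 1 * g w 2 - g v 2 * g w 1)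
             - g v 0 * (g u 1 * g w 2 - g u 2 * g w 1)
             + g w 0 * (g u 1 * g v 2 - g u 2 * g v 1).
Proof.
rewrite /det3 (expand_det_col _ ord0) !big_ord_recr big_ord0 /cofactor /=.
rewrite !(expand_det_col _ ord0) !big_ord_recr big_ord0 /cofactor /= !det_mx11 !mxE /=.
rewrite !cv /= !big_ord0 /bump /=.
ring.

Qed.

Section S.
Variable R : realFieldType.
Implicit Types u v w p a b c : 'cV[R]_3.

Lemma g2 u : u 2%:R 0 = g u 2.
Proof. by rewrite /g; congr (u _ _); apply: val_inj; rewrite /= inordK. Qed.

Lemma gaff u n : g (aff u) n = (g u 2)^-1 * g u n.
Proof. by rewrite /g /aff mxE g2. Qed.

Definition X u := g (aff u) 0.
Definition Y u := g (aff u) 1.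

Lemma orientE u v w : in_affine u -> in_affine v -> in_affine w ->
  orient u v w = (X v - X u) * (Y w - Y u) - (Y v - Y u) * (X w - X u).
Proof.
rewrite /in_affine !g2 => hu hv hw.
rewrite /orient det3E /X /Y !(gaff _ 2) !mulVf //.
ring.
Qed.

Lemma rot u v w : in_affine u -> in_affine v -> in_affine w ->
  orient u v w = orient v w u.
Proof. by move=> hu hv hw; rewrite !orientE //; ring. Qed.

Lemma in_int_orient p a b c : in_int p a b c -> 0 < orient a b c ->
  [/\ 0 < orient a b p, 0 < orient b c p & 0 < orient c a p].
Proof.
case=> hp ha hb hc [l1 [l2 [l3 [h1 h2 h3 hs E]]]] hO.
have EX : X p = l1 * X a + l2 * X b + l3 * X c.
  by rewrite /X /g E !mxE.
have EY : Y p = l1 * Y a + l2 * Y b + l3 * Y c.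
  by rewrite /Y /g E !mxE.
have l1E : l1 = 1 - l2 - l3 by rewrite -hs; ring.
have e1 : orient a b p = l3 * orient a b c by rewrite !orientE // EX EY l1E; ring.
have e2 : orient b c p = l1 * orient a b c by rewrite !orientE // EX EY l1E; ring.
have e3 : orient c a p = l2 * orient a b c by rewrite !orientE // EX EY l1E; ring.
by rewrite e1 e2 e3 !mulr_gt0.
Qed.

Lemma plk p x y z w : in_affine p -> in_affine x -> in_affine y -> in_affine z -> in_affine w ->
  orient p x y * orient p z w = orient p x z * orient p y w + orient p x w * orient p z y.
Proof. by move=> *; rewrite !orientE //; ring. Qed.

Lemma swp p x y : in_affine p -> in_affine x -> in_affine y ->
  orient p x y = - orient p y x.
Proof. by move=> *; rewrite !orientE //; ring. Qed.

Lemma pos_of (x y : R) : 0 < y -> 0 < x * y -> 0 < x.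
Proof. by move=> hy; rewrite pmulr_lgt0. Qed.

End S.
Arguments in_int_orient {R}. Arguments swp {R}. Arguments plk {R}. Arguments rot {R}. Arguments pos_of {R}.
From mathcomp Require Import zify.

Theorem mainTheorem4 (R : realFieldType) (k n : nat) (N : int) (P : int -> 'cV[R]_3) :
  (3 <= k)%N -> (2 <= n)%N ->
  (spiral_alpha k n P -> Nrep_alpha k N P ->
     forall i : int, N < i ->
       positive_triple (P i) (P (i + k%:Z)) (P (i + (2 * k)%N%:Z))) /\
  (spiral_beta k n P -> Nrep_beta k N P ->
     forall i : int, N < i ->
       positive_triple (P (i + (2 * k)%N%:Z)) (P (i + k%:Z)) (P i)).
Proof.
move=> _ _.
have E2 : forall i : int, i + (2 * k)%N%:Z = i + k%:Z + k%:Z by move=> i; lia.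
split.
- move=> _ H i Ni.
  have Hm := H (i - 1) ltac:(lia).
  have H0 := H i ltac:(lia).
  have Hk1 := H (i + k%:Z - 1) ltac:(lia).
  have Hk := H (i + k%:Z) ltac:(lia).
  rewrite (_ : i - 1 + 1 = i) in Hm; last lia.
  rewrite (_ : i - 1 + k%:Z + 1 = i + k%:Z) in Hm; last lia.
  rewrite (_ : i - 1 + k%:Z = i + k%:Z - 1) in Hm; last lia.
  rewrite (_ : i + k%:Z - 1 + 1 = i + k%:Z) in Hk1; last lia.
  rewrite (_ : i + k%:Z - 1 + 2 = i + k%:Z + 1) in Hk1; last lia.
  rewrite (_ : i + k%:Z - 1 + k%:Z + 1 = i + k%:Z + k%:Z) in Hk1; last lia.
  rewrite E2.
  set p := P (i + k%:Z) in Hm H0 Hk1 Hk *.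
  set a := P i in Hm H0 Hk1 Hk *.
  set r := P (i + k%:Z + 1) in Hm H0 Hk1 Hk *.
  set c := P (i + k%:Z - 1) in Hm H0 Hk1 Hk *.
  set b := P (i + k%:Z + k%:Z) in Hm H0 Hk1 Hk *.
  case: Hm => _ _ [ha' ha hp hm] Im.
  case: H0 => _ _ [_ hs hr h0] I0.
  case: Hk1 => _ [hc _ _ f3] [_ _ hb f4] _.
  case: Hk => _ _ [_ _ hq hk] Ik.
  case: (in_int_orient _ _ _ _ Im hm) => _ f5 _.
  case: (in_int_orient _ _ _ _ I0 h0) => _ _ f1.
  case: (in_int_orient _ _ _ _ Ik hk) => f2 _ _.
  rewrite -rot // in f1; rewrite rot // in f3; rewrite rot // in f4; rewrite rot // in f5.
  split => //.
  rewrite rot //.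
  apply: (pos_of _ _ f3).
  rewrite plk // (swp p b r) // (swp p a c) // mulrNN.

  by apply: addr_gt0; apply: mulr_gt0.
- move=> _ H i Ni.
  have Hm := H (i - 1) ltac:(lia).
  have H0 := H i ltac:(lia).
  have Hk1 := H (i + k%:Z - 1) ltac:(lia).
  have Hk := H (i + k%:Z) ltac:(lia).
  rewrite (_ : i - 1 + 1 = i) in Hm; last lia.
  rewrite (_ : i - 1 + k%:Z + 1 = i + k%:Z) in Hm; last lia.
  rewrite (_ : i - 1 + k%:Z = i + k%:Z - 1) in Hm; last lia.
  rewrite (_ : i + k%:Z - 1 + 1 = i + k%:Z) in Hk1; last lia.
  rewrite (_ : i + k%:Z - 1 + 2 = i + k%:Z + 1) in Hk1; last lia.
  rewrite (_ : i + k%:Z - 1 + k%:Z + 1 = i + k%:Z + k%:Z) in Hk1; last lia.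
  rewrite E2.
  set p := P (i + k%:Z) in Hm H0 Hk1 Hk *.
  set a := P i in Hm H0 Hk1 Hk *.
  set r := P (i + k%:Z + 1) in Hm H0 Hk1 Hk *.
  set c := P (i + k%:Z - 1) in Hm H0 Hk1 Hk *.
  set b := P (i + k%:Z + k%:Z) in Hm H0 Hk1 Hk *.
  case: Hm => _ _ [ha' ha hc hm] Im.
  case: H0 => _ _ [_ hs hp h0] I0.
  case: Hk1 => _ [_ _ hr f3] [_ _ hd hk1] Ik1.
  case: Hk => _ _ [_ _ hb f2] _.
  case: (in_int_orient _ _ _ _ Im hm) => _ f5 _.
  case: (in_int_orient _ _ _ _ I0 h0) => _ _ f1.
  case: (in_int_orient _ _ _ _ Ik1 hk1) => f4 _ _.
  rewrite -rot // in f5; rewrite rot // in f3; rewrite rot // in f4.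
  split => //.
  rewrite rot //.
  apply: (pos_of _ _ f3).
  rewrite plk //.
  by apply: addr_gt0; apply: mulr_gt0.
Qed.
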